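(* Let $n,p\ge1$ and let $\alpha\in\widehat F_{(n,p)}$ be homogeneous of fine degree $\underline{k}$. Assume that each line and each column of $\mathrm{supp}(\underline{k})$ is nonempty. Then $\alpha=0$ unless $\mathrm{supp}(\underline{k})$ satisfies: for all proper subsets $S_1\subset\{1,\dots,n\}$, $S_2\subset\{1,\dots,p\}$ (nonempty with nonempty complements $\bar S_1,\bar S_2$), $\mathrm{supp}(\underline{k})\not\subset(S_1\times S_2)\cup(\bar S_1\times\bar S_2)$.
   Context: Work over a field of characteristic $0$. $F_{(n,p)}$ is the Lie algebra generated by $x_{i,j}$, $(i,j)\in\{1,\dots,n\}\times\{1,\dots,p\}$, with defining relations $[x_{i,j},x_{i',j'}]=0$ whenever $i\ne i'$ and $j\ne j'$; it is graded by the fine degree in $\bigoplus_{(i,j)}\mathbb{N}\epsilon_{(i,j)}$ ($\deg x_{i,j}=\epsilon_{(i,j)}$) and by total degree ($\deg x_{i,j}=1$), and $\widehat F_{(n,p)}$ is its completion for the total degree. For $\underline{k}=\sum k_{(i,j)}\epsilon_{(i,j)}$, $\mathrm{supp}(\underline{k})=\{(i,j)\mid k_{(i,j)}\ne0\}$; the $i$-th column of a set $S$ is $S\cap(\{i\}\times\{1,\dots,p\})$ and the $j$-th line is $S\cap(\{1,\dots,n\}\times\{j\})$. *)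

(* Defs.v *)
From mathcomp Require Import all_boot all_algebra.
Set Implicit Arguments. Unset Strict Implicit. Unset Printing Implicit Defensive.
Import GRing.Theory.
Local Open Scope ring_scope.

(* F_(n,p) presented by generators and relations: formal Lie expressions
   modulo the smallest congruence making them a Lie algebra over K in which
   [x_{i,j}, x_{i',j'}] = 0 for i <> i' and j <> j'. *)
Section LieF.
Variables (K : fieldType) (n p : nat).

Inductive lexpr : Type :=
| LGen of 'I_n & 'I_p
| LZero
| LAdd of lexpr & lexpr
| LScale of K & lexpr
| LBr of lexpr & lexpr.

Inductive lie_eq : lexpr -> lexpr -> Prop :=
| le_refl a : lie_eq a a
| le_sym a b : lie_eq a b -> lie_eq b a
| le_trans a b c : lie_eq a b -> lie_eq b c -> lie_eq a c
| le_add a a' b b' : lie_eq a a' -> lie_eq b b' -> lie_eq (LAdd a b) (LAdd a' b')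
| le_scale c a a' : lie_eq a a' -> lie_eq (LScale c a) (LScale c a')
| le_br a a' b b' : lie_eq a a' -> lie_eq b b' -> lie_eq (LBr a b) (LBr a' b')
| le_addA a b c : lie_eq (LAdd a (LAdd b c)) (LAdd (LAdd a b) c)
| le_addC a b : lie_eq (LAdd a b) (LAdd b a)
| le_add0 a : lie_eq (LAdd a LZero) a
| le_addN a : lie_eq (LAdd a (LScale (-1) a)) LZero
| le_scale1 a : lie_eq (LScale 1 a) a
| le_scaleA c d a : lie_eq (LScale c (LScale d a)) (LScale (c * d) a)
| le_scaleDr c a b : lie_eq (LScale c (LAdd a b)) (LAdd (LScale c a) (LScale c b))
| le_scaleDl c d a : lie_eq (LScale (c + d) a) (LAdd (LScale c a) (LScale d a))
| le_brDl a b c : lie_eq (LBr (LAdd a b) c) (LAdd (LBr a c) (LBr b c))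
| le_brDr a b c : lie_eq (LBr a (LAdd b c)) (LAdd (LBr a b) (LBr a c))
| le_brZl c a b : lie_eq (LBr (LScale c a) b) (LScale c (LBr a b))
| le_brZr c a b : lie_eq (LBr a (LScale c b)) (LScale c (LBr a b))
| le_alt a : lie_eq (LBr a a) LZero
| le_jacobi a b c :
    lie_eq (LAdd (LBr a (LBr b c)) (LAdd (LBr b (LBr c a)) (LBr c (LBr a b)))) LZero
| le_rel (i i' : 'I_n) (j j' : 'I_p) :
    i != i' -> j != j' -> lie_eq (LBr (LGen i j) (LGen i' j')) LZero.

Definition fdeg := {ffun 'I_n * 'I_p -> nat}.
Definition fdeg_add (k1 k2 : fdeg) : fdeg := [ffun x => k1 x + k2 x].
Definition fdeg_eps (i : 'I_n) (j : 'I_p) : fdeg :=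
  [ffun x => if x == (i, j) then 1 else 0]%N.

Inductive homog : fdeg -> lexpr -> Prop :=
| h_gen i j : homog (fdeg_eps i j) (LGen i j)
| h_zero k : homog k LZero
| h_add k a b : homog k a -> homog k b -> homog k (LAdd a b)
| h_scale k c a : homog k a -> homog k (LScale c a)
| h_br k1 k2 a b : homog k1 a -> homog k2 b -> homog (fdeg_add k1 k2) (LBr a b).

Definition supp (k : fdeg) : {set 'I_n * 'I_p} := [set x | k x != 0%N].

End LieF.

(* Main.v *)
Require Import Defs.
From mathcomp Require Import all_boot all_algebra.
Local Open Scope ring_scope.

Section Proof.
Variables (K : fieldType) (n p : nat).
Local Notation E := (lexpr K n p).
Local Notation Z := (LZero K n p).

Lemma tr (a b c : E) : lie_eq a b -> lie_eq b c -> lie_eq a c.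
Proof. exact: le_trans. Qed.

Lemma self_double (u : E) : lie_eq u (LAdd u u) -> lie_eq u Z.
Proof.
move=> H.
apply: tr (le_sym (le_add0 u)) _.
apply: tr (le_add (le_refl u) (le_sym (le_addN u))) _.
apply: tr (le_addA _ _ _) _.
apply: tr (le_add (le_sym H) (le_refl _)) _.
exact: le_addN.
Qed.

Lemma br0r (x : E) : lie_eq (LBr x Z) Z.
Proof.
apply: self_double.
apply: tr (le_br (le_refl x) (le_sym (le_add0 Z))) _.
exact: le_brDr.
Qed.

Lemma br0l (x : E) : lie_eq (LBr Z x) Z.
Proof.
apply: self_double.
apply: tr (le_br (le_sym (le_add0 Z)) (le_refl x)) _.
exact: le_brDl.
Qed.

Lemma scale0 c : lie_eq (LScale c Z) Z.
Proof.
apply: self_double.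
apply: tr (le_scale c (le_sym (le_add0 Z))) _.
exact: le_scaleDr.
Qed.

Lemma add_zero {a b : E} : lie_eq a Z -> lie_eq b Z -> lie_eq (LAdd a b) Z.
Proof. move=> Ha Hb; exact: tr (le_add Ha Hb) (le_add0 Z). Qed.

Lemma zero_add (a : E) : lie_eq (LAdd Z a) a.
Proof. exact: tr (le_addC _ _) (le_add0 a). Qed.

Lemma brr0 (x y : E) : lie_eq y Z -> lie_eq (LBr x y) Z.
Proof. move=> H; exact: tr (le_br (le_refl x) H) (br0r x). Qed.

Lemma brl0 (x y : E) : lie_eq x Z -> lie_eq (LBr x y) Z.
Proof. move=> H; exact: tr (le_br H (le_refl y)) (br0l y). Qed.

Lemma antisym0 (x y : E) : lie_eq (LBr y x) Z -> lie_eq (LBr x y) Z.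
Proof.
move=> H.
suff HH : lie_eq Z (LBr x y) by apply: le_sym.
apply: tr (le_sym (le_alt (LAdd x y))) _.
apply: tr (le_brDl _ _ _) _.
apply: tr (le_add (le_brDr _ _ _) (le_brDr _ _ _)) _.
apply: tr (le_add (le_refl _) (add_zero H (le_alt y))) _.
apply: tr (le_add0 _) _.
apply: tr (le_add (le_alt x) (le_refl _)) _.
exact: zero_add.
Qed.

Lemma jac0 (a1 a2 b : E) : lie_eq (LBr a1 (LBr a2 b)) Z ->
  lie_eq (LBr a2 (LBr b a1)) Z -> lie_eq (LBr b (LBr a1 a2)) Z.
Proof.
move=> H1 H2.
apply: tr (le_sym (zero_add _)) _.
apply: tr (le_add (le_refl _) (le_sym (zero_add _))) _.
apply: tr (le_add (le_sym H1) (le_add (le_sym H2) (le_refl _))) _.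
exact: le_jacobi.
Qed.

Fixpoint inB (B : {set 'I_n * 'I_p}) (a : E) : bool :=
  match a with
  | LGen i j => (i, j) \in B
  | LZero => true
  | LAdd a b => inB B a && inB B b
  | LScale _ a => inB B a
  | LBr a b => inB B a && inB B b
  end.

Variables (B1 B2 : {set 'I_n * 'I_p}).
Hypothesis H12 : forall i j i' j', (i, j) \in B1 -> (i', j') \in B2 ->
  i != i' /\ j != j'.

Lemma genB i j : (i, j) \in B1 -> forall b, inB B2 b ->
  lie_eq (LBr (LGen K i j) b) Z.
Proof.
move=> hij; elim=> [i' j'|| b1 IH1 b2 IH2 | c b1 IH1 | b1 IH1 b2 IH2] /=.
- by move=> h; case: (H12 _ _ _ _ hij h) => h1 h2; apply: le_rel.
- by move=> _; apply: br0r.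
- move=> /andP[h1 h2]; apply: tr (le_brDr _ _ _) _; exact: add_zero (IH1 h1) (IH2 h2).
- move=> h1; apply: tr (le_brZr _ _ _) _; exact: tr (le_scale c (IH1 h1)) (scale0 c).
- move=> /andP[h1 h2]; apply: jac0.
  + by apply: brr0; apply: antisym0; apply: IH2.
  + by apply: brr0; apply: IH1.
Qed.

Lemma key a b : inB B1 a -> inB B2 b -> lie_eq (LBr a b) Z.
Proof.
move=> + hb.
elim: a => [i j|| a1 IH1 a2 IH2 | c a1 IH1 | a1 IH1 a2 IH2] /=.
- by move=> h; apply: genB.
- by move=> _; apply: br0l.
- move=> /andP[h1 h2]; apply: tr (le_brDl _ _ _) _; exact: add_zero (IH1 h1) (IH2 h2).
- move=> h1; apply: tr (le_brZl _ _ _) _; exact: tr (le_scale c (IH1 h1)) (scale0 c).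
- move=> /andP[h1 h2]; apply: antisym0; apply: jac0.
  + by apply: brr0; apply: IH2.
  + by apply: brr0; apply: antisym0; apply: IH1.
Qed.

Definition meets (k : fdeg n p) (B : {set 'I_n * 'I_p}) :=
  [exists x, (x \in supp k) && (x \in B)].

Lemma supp_add (k1 k2 : fdeg n p) x :
  (x \in supp (fdeg_add k1 k2)) = (x \in supp k1) || (x \in supp k2).
Proof. by rewrite !inE !ffunE addn_eq0 negb_and. Qed.

Lemma meets_add (k1 k2 : fdeg n p) B :
  meets (fdeg_add k1 k2) B = meets k1 B || meets k2 B.
Proof.
apply/existsP/orP.
- by case=> x /andP[]; rewrite supp_add => /orP[] h hB; [left|right];
     apply/existsP; exists x; rewrite h hB.
- by case=> /existsP[x /andP[h hB]]; exists x; rewrite supp_add h hB ?orbT.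
Qed.

Lemma meets_eps (i : 'I_n) (j : 'I_p) B : meets (fdeg_eps i j) B = ((i, j) \in B).
Proof.
apply/existsP/idP.
- case=> x /andP[h hB]; move: h; rewrite inE ffunE.
  by case: (x =P (i, j)) => [e _|]; [rewrite -e | ].
- by move=> h; exists (i, j); rewrite h !inE ffunE eqxx.
Qed.

Lemma main k a : homog k a ->
  (forall x, x \in supp k -> (x \in B1) || (x \in B2)) ->
  [/\ meets k B1 -> meets k B2 -> lie_eq a Z,
      ~~ meets k B2 -> exists a', inB B1 a' /\ lie_eq a a' &
      ~~ meets k B1 -> exists b', inB B2 b' /\ lie_eq a b'].
Proof.
elim=> {k a} [i j | k | k a b _ IHa _ IHb | k c a _ IHa | k1 k2 a b _ IHa _ IHb] hs.
- have hx : ((i, j) \in B1) || ((i, j) \in B2).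
    by apply: hs; rewrite !inE ffunE eqxx.
  rewrite !meets_eps; split.
  + move=> h1 h2; case: (H12 _ _ _ _ h1 h2); by rewrite eqxx.
  + by move=> h; exists (LGen K i j); split; last exact: le_refl; move: hx; rewrite /= (negbTE h) orbF.
  + by move=> h; exists (LGen K i j); split; last exact: le_refl; move: hx; rewrite /= (negbTE h).
- split => [_ _|_|_]; first exact: le_refl.
  + by exists Z; split => //; apply: le_refl.
  + by exists Z; split => //; apply: le_refl.
- case: (IHa hs) => a1 a2 a3; case: (IHb hs) => b1 b2 b3; split.
  + by move=> h1 h2; apply: add_zero; [apply: a1|apply: b1].
  + move=> h; case: (a2 h) => a' [ha ea]; case: (b2 h) => b' [hb eb].
    by exists (LAdd a' b'); split; [rewrite /= ha hb | apply: le_add].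
  + move=> h; case: (a3 h) => a' [ha ea]; case: (b3 h) => b' [hb eb].
    by exists (LAdd a' b'); split; [rewrite /= ha hb | apply: le_add].
- case: (IHa hs) => a1 a2 a3; split.
  + by move=> h1 h2; apply: tr (le_scale c (a1 h1 h2)) (scale0 c).
  + move=> h; case: (a2 h) => a' [ha ea].
    by exists (LScale c a'); split => //; apply: le_scale.
  + move=> h; case: (a3 h) => a' [ha ea].
    by exists (LScale c a'); split => //; apply: le_scale.
- have hs1 : forall x, x \in supp k1 -> (x \in B1) || (x \in B2).
    by move=> x hx; apply: hs; rewrite supp_add hx.
  have hs2 : forall x, x \in supp k2 -> (x \in B1) || (x \in B2).
    by move=> x hx; apply: hs; rewrite supp_add hx orbT.
  case: (IHa hs1) => a1 a2 a3; case: (IHb hs2) => b1 b2 b3.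
  rewrite !meets_add; split.
  + move=> h1 h2.
    case m11: (meets k1 B1); case m12: (meets k1 B2);
    case m21: (meets k2 B1); case m22: (meets k2 B2);
    rewrite ?m11 ?m12 ?m21 ?m22 /= in h1 h2 a1 a2 a3 b1 b2 b3 => //;
    try (by apply: brl0; apply: a1);
    try (by apply: brr0; apply: b1);
    first [ (case: (a2 isT) => a' [ha ea]; case: (b3 isT) => b' [hb eb];
             apply: tr (le_br ea eb) _; exact: key)
          | (case: (a3 isT) => a' [ha ea]; case: (b2 isT) => b' [hb eb];
             apply: tr (le_br ea eb) _; apply: antisym0; exact: key) ].
  + rewrite negb_or => /andP[h h'].
    case: (a2 h) => a' [ha ea]; case: (b2 h') => b' [hb eb].
    by exists (LBr a' b'); split; [rewrite /= ha hb | apply: le_br].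
  + rewrite negb_or => /andP[h h'].
    case: (a3 h) => a' [ha ea]; case: (b3 h') => b' [hb eb].
    by exists (LBr a' b'); split; [rewrite /= ha hb | apply: le_br].
Qed.

End Proof.

Theorem lemma1p7 (K : fieldType) (n p : nat) (k : fdeg n p) (alpha : lexpr K n p) :
  [pchar K] =i pred0 ->
  (0 < n)%N -> (0 < p)%N ->
  homog k alpha ->
  (forall i : 'I_n, exists j : 'I_p, (i, j) \in supp k) ->
  (forall j : 'I_p, exists i : 'I_n, (i, j) \in supp k) ->
  (exists (S1 : {set 'I_n}) (S2 : {set 'I_p}),
     [/\ S1 != set0, ~: S1 != set0, S2 != set0, ~: S2 != set0 &
        supp k \subset setX S1 S2 :|: setX (~: S1) (~: S2)]) ->
  lie_eq alpha (LZero K n p).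
Proof.
move=> _ _ _ hk hrow _ [S1 [S2 [/set0Pn[i0 hi0] /set0Pn[i1 hi1] _ _ hsub]]].
set B1 := setX S1 S2; set B2 := setX (~: S1) (~: S2).
have H12 : forall i j i' j', (i, j) \in B1 -> (i', j') \in B2 ->
    i != i' /\ j != j'.
  move=> i j i' j'; rewrite !inE /= => /andP[h1 h2] /andP[h3 h4].
  by split; apply/eqP => e; subst; [rewrite h1 in h3 | rewrite h2 in h4].
have hs : forall x, x \in supp k -> (x \in B1) || (x \in B2).
  by move=> x hx; have := subsetP hsub x hx; rewrite inE.
case: (@main K n p B1 B2 H12 k alpha hk hs) => h _ _; apply: h.
- case: (hrow i0) => j hj; apply/existsP; exists (i0, j); rewrite hj /=.
  have := hs _ hj; rewrite !inE /= hi0 /=.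
  by case/orP => // /andP[].
- case: (hrow i1) => j hj; apply/existsP; exists (i1, j); rewrite hj /=.
  have := hs _ hj; rewrite !inE /=; rewrite inE in hi1; rewrite hi1 /=.
  by case/orP => // /andP[] h; rewrite h in hi1.
Qed.
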